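(* Let $I\subset S=K[x_1,\dots,x_t]$ be an $\mathfrak m$-primary monomial ideal, where $\mathfrak m=\langle x_1,\dots,x_t\rangle$. Let $\mathcal M$ be the set of all $t\times t$ matrices $A=(a_{ij})$ whose rows are the exponent vectors of $t$ elements chosen from $\mathscr G(I)$ and which satisfy: (1) $a_{ii}>a_{li}$ for all $l\ne i$ and all $i=1,\dots,t$; (2) $(a_{11}-1,\dots,a_{tt}-1)\notin E(I)$. Then $$v(I)=\min\{\operatorname{tr}(A)-t : A\in\mathcal M\}.$$
   Context: $K$ is a field and $S$ is standard graded. For a proper graded ideal $I$, the $v$-number is $v(I)=\min\{k\ge 0 : \exists f\in S_k,\ \mathcal P\in\operatorname{Ass}(S/I) \text{ with } (I:f)=\mathcal P\}$. For a monomial ideal $I$, $\mathscr G(I)$ is its unique minimal set of monomial generators, and $E(I)\subseteq\mathbb Z_{\ge0}^t$ is the set of exponent vectors of the monomials lying in $I$ (the monomial $x_1^{a_1}\cdots x_t^{a_t}$ has exponent vector $(a_1,\dots,a_t)$). $\operatorname{tr}$ denotes the trace. *)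

(* Defs.v *)
From HB Require Import structures.
From mathcomp Require Import all_boot all_order all_algebra.
From mathcomp Require Import mpoly.
Set Implicit Arguments. Unset Strict Implicit. Unset Printing Implicit Defensive.
Import GRing.Theory.
Local Open Scope ring_scope.

Section Defs.
Variables (K : fieldType) (t : nat).
Local Notation S := {mpoly K[t]}.

Definition is_ideal (I : S -> Prop) : Prop :=
  [/\ I 0, (forall a b, I a -> I b -> I (a + b)) & (forall r a, I a -> I (r * a))].

Definition ideal_gen (A : S -> Prop) : S -> Prop := fun f =>
  exists s : seq (S * S), (forall p, p \in s -> A p.2) /\
                          f = \sum_(p <- s) p.1 * p.2.

Definition proper_ideal (I : S -> Prop) : Prop := is_ideal I /\ ~ I 1.

Definition prime_ideal (P : S -> Prop) : Prop :=
  proper_ideal P /\ (forall a b, P (a * b) -> P a \/ P b).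

Definition primary_ideal (Q : S -> Prop) : Prop :=
  proper_ideal Q /\ (forall a b, Q (a * b) -> ~ Q a -> exists n, Q (b ^+ n)).

Definition radical (I : S -> Prop) : S -> Prop := fun f => exists n, I (f ^+ n).

Definition max_irr : S -> Prop := ideal_gen (fun f => exists i : 'I_t, f = 'X_i).

Definition m_primary (I : S -> Prop) : Prop :=
  primary_ideal I /\ (forall f, radical I f <-> max_irr f).

Definition monomial_ideal (I : S -> Prop) : Prop :=
  is_ideal I /\ exists A : 'X_{1..t} -> Prop,
    forall f, I f <-> ideal_gen (fun g => exists m, A m /\ g = 'X_[m]) f.

Definition colon (I : S -> Prop) (f : S) : S -> Prop := fun g => I (g * f).

Definition Ass (I : S -> Prop) (P : S -> Prop) : Prop :=
  prime_ideal P /\ exists g : S, forall h, P h <-> colon I g h.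

Definition vnumber_witness (I : S -> Prop) (k : nat) : Prop :=
  exists (f : S) (P : S -> Prop),
    f \is k.-homog /\ Ass I P /\ (forall h, colon I f h <-> P h).

Definition is_vnumber (I : S -> Prop) (n : nat) : Prop :=
  vnumber_witness I n /\ (forall k, vnumber_witness I k -> (n <= k)%N).

Definition E (I : S -> Prop) (a : 'X_{1..t}) : Prop := I 'X_[a].

(* G(I): minimal monomial generators = monomials of I minimal for divisibility *)
Definition mingens (I : S -> Prop) (a : 'X_{1..t}) : Prop :=
  I 'X_[a] /\ (forall b : 'X_{1..t}, I 'X_[b] -> (b <= a)%MM -> b = a).

Definition matM (I : S -> Prop) (A : 'M[nat]_t) : Prop :=
  [/\ (forall i : 'I_t, exists a, mingens I a /\ forall j, A i j = a j),
      (forall i l : 'I_t, l != i -> (A l i < A i i)%N)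
    & ~ E I [multinom (A i i).-1 | i < t]].

Definition trace_nat (A : 'M[nat]_t) : nat := (\sum_(i < t) A i i)%N.

End Defs.

(* Main.v *)
Set Warnings "-notation-overridden,-ambiguous-paths,-notation-incompatible-prefix".
Require Import Defs.
From HB Require Import structures.
From mathcomp Require Import all_boot all_order all_algebra.
From mathcomp Require Import mpoly.
From Stdlib Require Import Classical.
From mathcomp Require Import zify.
Set Implicit Arguments. Unset Strict Implicit. Unset Printing Implicit Defensive.
Import GRing.Theory.

Lemma ex_min_nat (P : nat -> Prop) :
  (exists n, P n) -> exists n, P n /\ forall m, P m -> (n <= m)%N.
Proof.
case=> n0 Pn0.
suff H : forall k n, (n <= k)%N -> P n -> exists n, P n /\ forall m, P m -> (n <= m)%N.
  exact: (H n0 n0 (leqnn _) Pn0).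
elim=> [|k IH] n Hn Pn.
  exists n; split => // m _; by move: Hn; rewrite leqn0 => /eqP ->.
case: (classic (exists m, (m < n)%N /\ P m)) => [[m [Hm Pm]]|Hno].
  apply: (IH m) => //; by rewrite -ltnS (leq_trans Hm Hn).
exists n; split => // m Pm; rewrite leqNgt; apply/negP => Hlt.
by apply: Hno; exists m.
Qed.

Local Open Scope ring_scope.

Section Aux.
Variables (K : fieldType) (t : nat) (I : {mpoly K[t]} -> Prop).
Hypothesis Iid : is_ideal I.

Lemma ideal0 : I 0. Proof. by case: Iid. Qed.
Lemma idealD a b : I a -> I b -> I (a + b). Proof. by case: Iid => _ H _; apply: H. Qed.
Lemma idealM r a : I a -> I (r * a). Proof. by case: Iid => _ _ H; apply: H. Qed.

Lemma ideal_sum (T : eqType) (s : seq T) (F : T -> {mpoly K[t]}) :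
  (forall x, x \in s -> I (F x)) -> I (\sum_(x <- s) F x).
Proof.
elim: s => [|x s IH] H; first by rewrite big_nil; exact: ideal0.
rewrite big_cons; apply: idealD; first by apply: H; rewrite inE eqxx.
by apply: IH => y Hy; apply: H; rewrite inE Hy orbT.
Qed.

Lemma monX_add a c : I 'X_[a] -> I 'X_[(c + a)%MM].
Proof. by move=> H; rewrite mpolyXD; apply: idealM. Qed.

Lemma monX_le a b : (a <= b)%MM -> I 'X_[a] -> I 'X_[b].
Proof. by move=> Hab H; rewrite -(submK Hab); apply: monX_add. Qed.

Lemma mono_bwd f : (forall m, m \in msupp f -> I 'X_[m]) -> I f.
Proof.
move=> H; rewrite [f]mpolyE; apply: ideal_sum => m Hm.
rewrite -mul_mpolyC; apply: idealM; apply: H.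
exact: Hm.
Qed.

End Aux.

Section Mono.
Variables (K : fieldType) (t : nat) (I : {mpoly K[t]} -> Prop).
Hypothesis Imon : monomial_ideal I.

Lemma Iid : is_ideal I. Proof. by case: Imon. Qed.

Lemma mono_fwd f : I f -> forall m, m \in msupp f -> I 'X_[m].
Proof.
case: Imon => Hid [A HA] /HA [s [Hs ->]].
elim: s Hs => [|p s IH] Hs m; first by rewrite big_nil msupp0.
rewrite big_cons => /msuppD_le; rewrite mem_cat => /orP [Hm|Hm]; last first.
  by apply: IH => // q Hq; apply: Hs; rewrite inE Hq orbT.
have [m0 [Am0 Ep]] : exists m0, A m0 /\ p.2 = 'X_[m0].
  by apply: Hs; rewrite inE eqxx.
have Im0 : I 'X_[m0].
  apply/HA; exists [:: ((1 : {mpoly K[t]}), 'X_[m0])]; split.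
    by move=> q; rewrite inE => /eqP ->; exists m0.
  by rewrite big_cons big_nil addr0 mul1r.
move: Hm; rewrite Ep (perm_mem (msuppMX _ _)) => /mapP [m' _ ->].
by rewrite addmC; apply: (monX_add Hid).
Qed.

End Mono.

Section Main.
Variables (K : fieldType) (t : nat) (I : {mpoly K[t]} -> Prop).
Hypothesis Imon : monomial_ideal I.
Hypothesis Iprim : m_primary I.

Let Hid := Iid Imon.

Lemma I_not1 : ~ I 1.
Proof. by case: Iprim => [[[_ H] _] _]. Qed.

Lemma Xpow (i : 'I_t) : exists n, I 'X_[(U_(i) *+ n)%MM].
Proof.
case: Iprim => _ /(_ 'X_i) [_ H].
have [n Hn] : radical I 'X_i.
  apply: H; exists [:: ((1 : {mpoly K[t]}), 'X_i)]; split.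
    by move=> q; rewrite inE => /eqP ->; exists i.
  by rewrite big_cons big_nil addr0 mul1r.
by exists n; rewrite -mpolyXn.
Qed.

Lemma bound_notin : exists B, forall c, ~ I 'X_[c] -> (mdeg c <= B)%N.
Proof.
have [N HN] := fin_all_exists Xpow.
exists (\sum_i N i)%N => c Hc; rewrite mdegE; apply: leq_sum => i _.
rewrite leqNgt; apply/negP => Hlt; apply: Hc.
apply: (monX_le Hid _ (HN i)); apply/mnm_lepP => j.
rewrite mulmnE mnm1E; case: eqP => [<-|_]; last by rewrite mul0n.
by rewrite mul1n ltnW.
Qed.

Definition soc (b : 'X_{1..t}) := ~ I 'X_[b] /\ forall i : 'I_t, I 'X_[(b + U_(i))%MM].

Lemma soc_exists : exists b, soc b.
Proof.
have [B HB] := bound_notin.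
suff H : forall d b, ~ I 'X_[b] -> (B - mdeg b <= d)%N -> exists b, soc b.
  apply: (H (B - mdeg 0%MM)%N 0%MM) => //; rewrite mpolyX0; exact: I_not1.
elim=> [|d IH] b Hb Hd.
  exists b; split => // i; apply: NNPP => Hi.
  have := HB _ Hi; rewrite mdegD mdeg1.
  have := HB _ Hb; move: Hd; lia.
case: (classic (forall i : 'I_t, I 'X_[(b + U_(i))%MM])) => [H|H].
  by exists b.
have [i Hi] := not_all_ex_not _ _ H.
apply: (IH _ Hi); have := HB _ Hi; rewrite mdegD mdeg1; move: Hd; lia.
Qed.

Lemma mingen_exists c : I 'X_[c] -> exists a, mingens I a /\ (a <= c)%MM.
Proof.
move: {2}(mdeg c) (leqnn (mdeg c)) => d; elim: d c => [|d IH] c Hd Hc.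
  exists c; split; last exact: lepm_refl.
  split=> // b _ Hbc; apply/mnmP => i.
  move: Hd; rewrite leqn0 mdeg_eq0 => /eqP Ec; subst c.
  by move/mnm_lepP: Hbc => /(_ i); rewrite mnm0E leqn0 => /eqP ->; rewrite ?mnm0E.
case: (classic (exists b, I 'X_[b] /\ (b <= c)%MM /\ b <> c)) => [[b [Hb [Hbc Hne]]]|Hno].
  have Hdeg : (mdeg b < mdeg c)%N.
    rewrite -(submK Hbc) mdegD -{1}(add0n (mdeg b)) ltn_add2r lt0n mdeg_eq0.
    apply/negP => /eqP E; apply: Hne; by rewrite -(submK Hbc) E add0m.
  have [a [Ha Hab]] := IH b (ltnSE (leq_trans Hdeg Hd)) Hb.
  by exists a; split => //; apply: lepm_trans Hab Hbc.
exists c; split; last exact: lepm_refl.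
split=> // b Hb Hbc; apply: NNPP => Hne; apply: Hno; by exists b.
Qed.

Lemma colon_char b h : soc b -> (I (h * 'X_[b]) <-> h@_0%MM = 0).
Proof.
case=> Hb Hbi; split.
  move=> H; apply: NNPP => Hh; apply: Hb.
  have := mono_fwd Imon H (m := (b + 0)%MM); rewrite addm0; apply.
  by rewrite mcoeff_msupp -{1}(addm0 b) mcoeffMX; apply/eqP.
move=> H0; apply: (mono_bwd Hid) => m.
rewrite (perm_mem (msuppMX _ _)) => /mapP [m' Hm' ->].
have Hne : m' <> 0%MM.
  by move=> E; move: Hm'; rewrite E mcoeff_msupp H0 eqxx.
have [i Hi] : exists i, m' i <> 0%N.
  apply: NNPP => Hno; apply: Hne; apply/mnmP => i; rewrite mnm0E.
  by apply: NNPP => Hi; apply: Hno; exists i.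
apply: (monX_le Hid _ (Hbi i)); apply/mnm_lepP => j.
rewrite !mnmDE leq_add2l mnm1E; case: eqP => [<-|_] //.
by rewrite lt0n; apply/eqP.
Qed.

Lemma colon_prime b : soc b -> prime_ideal (colon I 'X_[b]).
Proof.
move=> Hs; split; first split.
- split; rewrite /colon.
  + by rewrite mul0r; exact: ideal0.
  + by move=> a c Ha Hc; rewrite mulrDl; apply: idealD.
  + by move=> r a Ha; rewrite -mulrA; apply: idealM.
- by rewrite /colon mul1r; case: Hs.
- move=> a c; rewrite /colon !(colon_char _ Hs).
  rewrite (rmorphM (mcoeff 0%MM)) /= => /eqP; rewrite mulf_eq0 => /orP [] /eqP; by [left|right].
Qed.

End Main.

Theorem theorem4p1 (K : fieldType) (t : nat) (I : {mpoly K[t]} -> Prop) :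
  monomial_ideal I -> m_primary I ->
  exists n : nat,
    is_vnumber I n /\
    (exists A, matM I A /\ (trace_nat A - t)%N = n) /\
    (forall A, matM I A -> (n <= trace_nat A - t)%N).
Proof.
move=> Imon Iprim.
have Hid := Iid Imon.
have [n [[b [Hb Hbn]] Hmin]] :=
  ex_min_nat (P := fun n => exists b, soc I b /\ mdeg b = n)
    (let: ex_intro b Hb := soc_exists Imon Iprim in ex_intro _ (mdeg b) (ex_intro _ b (conj Hb erefl))).
exists n; split; [|split].
- split.
  + exists 'X_[b], (colon I 'X_[b]); split; first by rewrite dhomogX; apply/eqP.
    split; last by [].
    split; first exact: colon_prime.
    by exists 'X_[b].
  + move=> k [f [P [Hf [[HP _] HfP]]]].
    have [[_ P1] Pprime] := HP.
    have IP : forall h, I h -> P h.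
      by move=> h Hh; apply/HfP; rewrite /colon mulrC; apply: idealM.
    have PX : forall i : 'I_t, P 'X_i.
      move=> i; have [m Hm] := Xpow Iprim i.
      have := IP _ Hm; rewrite -mpolyXn.
      elim: m {Hm} => [|m IHm]; first by rewrite expr0.
      by rewrite exprS => /Pprime [].
    have Hnf : ~ I f.
      by move=> Hf'; apply: P1; apply/HfP; rewrite /colon mul1r.
    have [u [Hu Hnu]] : exists u, u \in msupp f /\ ~ I 'X_[u].
      apply: NNPP => Hno; apply: Hnf; apply: (mono_bwd Hid) => m Hm.
      by apply: NNPP => Hm'; apply: Hno; exists m.
    apply: Hmin; exists u; split; last by move/dhomogP: Hf; apply.
    split=> // i; have Hi : I ('X_i * f) by apply/HfP; apply: PX.
    rewrite addmC; apply: (mono_fwd Imon Hi).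
    by rewrite mcoeff_msupp mulrC mcoeffMX -mcoeff_msupp.
-
  case: Hb => Hb Hbi.
  have Ha : forall i : 'I_t, exists a, mingens I a /\ (a <= b + U_(i))%MM.
    by move=> i; apply: mingen_exists.
  have [a Hai] := fin_all_exists Ha.
  have Hdiag : forall i, a i i = (b i).+1.
    move=> i; have [[Ia _] Hle] := Hai i.
    have := mnm_lepP Hle i; rewrite mnmDE mnm1E eqxx addn1 leq_eqVlt => /orP [/eqP //|].
    rewrite ltnS => Hlt; exfalso; apply: Hb; apply: (monX_le Hid _ Ia).
    apply/mnm_lepP => j; case: (eqVneq i j) => [<- //|Hij].
    by have := mnm_lepP Hle j; rewrite mnmDE mnm1E (negbTE Hij) addn0.
  exists (\matrix_(i, j) a i j); split; first split.
  + by move=> i; exists (a i); split; [case: (Hai i)|move=> j; rewrite mxE].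
  + move=> i l Hli; rewrite !mxE Hdiag.
    have := mnm_lepP (proj2 (Hai l)) i; rewrite mnmDE mnm1E (negbTE Hli) addn0.
    by rewrite ltnS.
  + rewrite /E.
    have -> : [multinom ((\matrix_(i, j) a i j : 'M[nat]_t) i i).-1 | i < t] = b.
      by apply/mnmP => i; rewrite mnmE mxE Hdiag.
    exact: Hb.
  + rewrite /trace_nat -Hbn mdegE.
    rewrite (eq_bigr (fun i => (b i + 1)%N)); last by move=> i _; rewrite mxE Hdiag addn1.
    by rewrite big_split /= sum_nat_const card_ord muln1 addnK.
- move=> A [Hrow Hlt HE].
  set b' := [multinom (A i i).-1 | i < t] in HE.
  have Hrowle : forall i a, mingens I a -> (forall j, A i j = a j) ->
      forall j, j != i -> (a j <= b' j)%N.
    move=> i a _ Ha j Hji; rewrite mnmE -Ha.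
    have Hij : i != j by rewrite eq_sym.
    by have := Hlt j i Hij; case: (A j j) => //.
  have Hpos : forall i, (0 < A i i)%N.
    move=> i; rewrite lt0n; apply/negP => /eqP H0.
    have [a [Amg Ha]] := Hrow i; have [Ia _] := Amg.
    apply: HE; apply: (monX_le Hid _ Ia); apply/mnm_lepP => j.
    case: (eqVneq j i) => [->|Hji]; last exact: (Hrowle i a Amg Ha).
    by rewrite -Ha H0.
  have Hsoc : soc I b'.
    split=> // i.
    have [a [Amg Ha]] := Hrow i; have [Ia _] := Amg.
    apply: (monX_le Hid _ Ia); apply/mnm_lepP => j; rewrite mnmDE mnm1E.
    case: (eqVneq j i) => [->|Hji]; last first.
      rewrite addn0; exact: (Hrowle i a Amg Ha).
    by rewrite addn1 mnmE -Ha prednK.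
  have Htr : (\sum_(i < t) A i i = mdeg b' + t)%N.
    rewrite mdegE (eq_bigr (fun i => b' i + 1)%N); last first.
      by move=> i _; rewrite mnmE addn1 prednK.
    by rewrite big_split /= sum_nat_const card_ord muln1.
  rewrite /trace_nat Htr addnK.
  exact: Hmin _ (ex_intro _ b' (conj Hsoc erefl)).
Qed.
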